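(* Let $G=(V,E)$ and $G'=(V',E')$ be graphs, and let $(u,v)$ be an ordered edge of $G$ and $(u',v')$ an ordered edge of $G'$. Then for every $t\ge0$: (1) If $\mathrm{eb}^{(t)}(G)=\mathrm{eb}^{(t)}(G')$, then $\mathrm{tp}^t(G)=\mathrm{tp}^t(G')$. (2) If $\mathrm{eb}^{(t)}(G,(u,v))=\mathrm{eb}^{(t)}(G',(u',v'))$ and $\mathrm{eb}^{(t)}(G)=\mathrm{eb}^{(t)}(G')$, then $\mathrm{tp}^t(G,u)=\mathrm{tp}^t(G',u')$, $\mathrm{tp}^t(G,v)=\mathrm{tp}^t(G',v')$, and $\mathrm{tp}^t(G,(u,v))=\mathrm{tp}^t(G',(u',v'))$.
   Context: All graphs are finite, simple and undirected, without isolated vertices; $N(v)$ denotes the neighborhood of $v$. An ordered edge of $G=(V,E)$ is a pair $(u,v)$ with $\{u,v\}\in E$. EB-1WL coloring: $\mathrm{eb}^{(0)}(G,(u,v))=1$ for every ordered edge, and $\mathrm{eb}^{(\ell+1)}(G,(u,v)) = \big(\mathrm{eb}^{(\ell)}(G,(u,v)),\ \{\!\{\mathrm{eb}^{(\ell)}(G,(u,x)) : x\in N(u)\}\!\},\ \{\!\{(\mathrm{eb}^{(\ell)}(G,(u,y)),\mathrm{eb}^{(\ell)}(G,(v,y))) : y\in N(u)\cap N(v)\}\!\},\ \{\!\{\mathrm{eb}^{(\ell)}(G,(v,z)) : z\in N(v)\}\!\}\big)$. $\mathrm{eb}^{(t)}(G)$ is the multiset of $\mathrm{eb}^{(t)}(G,(u,v))$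 over all ordered edges $(u,v)$ of $G$. Logic: first-order logic over the vocabulary with one binary relation $E$, where $E(x,y)$ holds of $(u,v)$ iff $\{u,v\}$ is an edge. For a tuple $\bar x=(x_1,\dots,x_n)$ of distinct variables, $\mathrm{clique}(\bar x):=\bigwedge_{1\le i<j\le n}E(x_i,x_j)$ (empty conjunction = true). CFOC is the smallest set of formulas such that: (1) $\mathrm{clique}(\bar x)$ is in CFOC; (2) if $\phi(\bar x)\in$ CFOC then $\mathrm{clique}(\bar x)\wedge\neg\phi(\bar x)\in$ CFOC; (3) if $\phi(\bar x),\psi(\bar y)\in$ CFOC then $\mathrm{clique}(\bar z)\wedge(\phi(\bar x)\star\psi(\bar y))\in$ CFOC for $\star\in\{\wedge,\vee\}$, where $\bar z$ lists each variable of $\bar x$ and $\bar y$ exactly once; (4) if $\phi(\bar x,y)\in$ CFOC then $\mathrm{clique}(\bar x)\wedge\exists^{\ge k}y\,\phi(\bar x,y)\in$ CFOC for every integer $k\ge1$ ($\exists^{\ge k}$: at least $k$ witnesses). $\mathrm{CFOC}^3$: CFOC formulas using at most three distinct variables. For a graph $G$ and a tuple $\bar v$ of vertices (possibly empty), the $t$-type $\mathrm{tp}^t(G,\bar v)$ is the set of $\mathrm{CFOC}^3$ formulas $\phi(\bar x)$ of quantifier depth $t$ (with $|\bar x|=|\bar v|$) such that $G\models\phi(\bar v)$; $\mathrm{tp}^t(G)$ is the set of such sentences true in $G$. *)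

(* Defs.v *)
From mathcomp Require Import all_boot.
Set Implicit Arguments.
Unset Strict Implicit.
Unset Printing Implicit Defensive.

Definition is_graph (T : finType) (e : rel T) : Prop :=
  symmetric e /\ irreflexive e /\ (forall v : T, exists u : T, e v u).

Definition nbhd (T : finType) (e : rel T) (v : T) : {set T} := [set x | e v x].

Definition oedges (T : finType) (e : rel T) : {set T * T} :=
  [set p | e p.1 p.2].

(* Multiset equality {{ c x : x in A }} = {{ c' y : y in B }}, where the
   relation R x y expresses "the colour of x equals the colour of y":
   a bijection between A and B matching equal colours. *)
Definition mset_eq (T T' : finType) (A : {set T}) (B : {set T'})
  (R : T -> T' -> Prop) : Prop :=
  exists f : {x : T | x \in A} -> {y : T' | y \in B},
    bijective f /\ forall x, R (val x) (val (f x)).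

(* eb_eq t e e' p p'  <->  eb^(t)(G,p) = eb^(t)(G',p')  *)
Fixpoint eb_eq (t : nat) (T T' : finType) (e : rel T) (e' : rel T')
  (p : T * T) (p' : T' * T') {struct t} : Prop :=
  match t with
  | 0 => True
  | s.+1 =>
      [/\ eb_eq s e e' p p',
          mset_eq (nbhd e p.1) (nbhd e' p'.1)
            (fun x x' => eb_eq s e e' (p.1, x) (p'.1, x')),
          mset_eq (nbhd e p.1 :&: nbhd e p.2) (nbhd e' p'.1 :&: nbhd e' p'.2)
            (fun y y' => eb_eq s e e' (p.1, y) (p'.1, y') /\
                         eb_eq s e e' (p.2, y) (p'.2, y')) &
          mset_eq (nbhd e p.2) (nbhd e' p'.2)
            (fun z z' => eb_eq s e e' (p.2, z) (p'.2, z'))]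
  end.

Definition eb_graph_eq (t : nat) (T T' : finType) (e : rel T) (e' : rel T') : Prop :=
  mset_eq (oedges e) (oedges e') (eb_eq t e e').

(* Variables: the three variables x_0, x_1, x_2 (type 'I_3).
   Each constructor carries the declared free-variable tuple of the formula. *)
Definition var := 'I_3.

Inductive form : Type :=
| FClique of seq var
| FNeg of seq var & form                  (* clique(xs) /\ ~ phi(xs) *)
| FAnd of seq var & form & form           (* clique(zs) /\ (phi /\ psi) *)
| FOr of seq var & form & form            (* clique(zs) /\ (phi \/ psi) *)
| FEx of seq var & nat & var & form.      (* clique(xs) /\ Ex>=k y. phi(xs,y) *)

Definition tup (f : form) : seq var :=
  match f with
  | FClique xs => xs
  | FNeg xs _ => xs
  | FAnd zs _ _ => zs
  | FOr zs _ _ => zs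
  | FEx xs _ _ _ => xs
  end.

Definition union_tuple (zs xs ys : seq var) : bool :=
  uniq zs && [forall v : var, (v \in zs) == ((v \in xs) || (v \in ys))].

Fixpoint wf (f : form) : bool :=
  match f with
  | FClique xs => uniq xs
  | FNeg xs g => wf g && (tup g == xs)
  | FAnd zs g h => [&& wf g, wf h & union_tuple zs (tup g) (tup h)]
  | FOr zs g h => [&& wf g, wf h & union_tuple zs (tup g) (tup h)]
  | FEx xs k y g => [&& wf g, 0 < k, uniq (rcons xs y) & tup g == rcons xs y]
  end.

Fixpoint qdepth (f : form) : nat :=
  match f with
  | FClique _ => 0
  | FNeg _ g => qdepth g
  | FAnd _ g h => maxn (qdepth g) (qdepth h)
  | FOr _ g h => maxn (qdepth g) (qdepth h)
  | FEx _ _ _ g => (qdepth g).+1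
  end.

Section Semantics.
Variables (T : finType) (e : rel T).

(* partial assignments of vertices to variables *)
Definition adj (a b : option T) : bool :=
  match a, b with Some x, Some y => e x y | _, _ => false end.

Definition clique_sat (xs : seq var) (a : var -> option T) : bool :=
  [forall i : var, forall j : var,
      [&& i \in xs, j \in xs & i != j] ==> adj (a i) (a j)].

Definition upd (a : var -> option T) (y : var) (w : T) : var -> option T :=
  fun i => if i == y then Some w else a i.

Fixpoint sat (f : form) (a : var -> option T) : bool :=
  match f with
  | FClique xs => clique_sat xs a
  | FNeg xs g => clique_sat xs a && ~~ sat g a
  | FAnd zs g h => clique_sat zs a && (sat g a && sat h a)
  | FOr zs g h => clique_sat zs a && (sat g a || sat h a)
  | FEx xs k y g => clique_sat xs a && (k <= #|[set w | sat g (upd a y w)]|)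
  end.

Definition assign (xs : seq var) (vs : seq T) : var -> option T :=
  fun i => if i \in xs then nth None (map Some vs) (index i xs) else None.

Definition models (f : form) (vs : seq T) : bool := sat f (assign (tup f) vs).

End Semantics.

Definition same_type (t : nat) (T T' : finType) (e : rel T) (e' : rel T')
  (vs : seq T) (vs' : seq T') : Prop :=
  forall f : form, wf f -> qdepth f <= t -> size (tup f) = size vs ->
    (models e f vs <-> models e' f vs').

(* Main.v *)
Require Import Defs.
From mathcomp Require Import all_boot.
Set Implicit Arguments. Unset Strict Implicit. Unset Printing Implicit Defensive.

Section Generic.
Variables (T T' : finType).

Lemma mset_eq_impl (A : {set T}) (B : {set T'}) (R R2 : T -> T' -> Prop) :
  mset_eq A B R -> (forall x y, R x y -> R2 x y) -> mset_eq A B R2.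
Proof. by case=> f [fb fR] H; exists f; split => // x; apply: H. Qed.

Lemma mset_count (A : {set T}) (B : {set T'}) R (P : pred T) (P' : pred T') :
  mset_eq A B R -> (forall x x', x \in A -> x' \in B -> R x x' -> P x = P' x') ->
  #|[set x in A | P x]| = #|[set x' in B | P' x']|.
Proof.
case=> f [fb fR] H.
have -> : [set x in A | P x] = val @: [set x : {x | x \in A} | P (val x)].
  apply/setP=> x; rewrite inE; apply/andP/imsetP.
    by case=> xA Px; exists (exist _ x xA) => //; rewrite inE.
  by case=> -[y yA] /=; rewrite inE /= => Py ->.
have -> : [set x' in B | P' x'] = val @: (f @: [set x : {x | x \in A} | P (val x)]).
  apply/setP=> x'; rewrite inE; apply/andP/imsetP.
    case=> xB Px.
    have [g fg gf] := fb.
    exists (f (g (exist _ x' xB))); last by rewrite gf.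
    apply/imsetP; exists (g (exist _ x' xB)) => //.
    by rewrite inE (H _ _ (valP _) (valP _) (fR _)) gf.
  case=> y /imsetP [x]; rewrite inE => Px -> ->.
  split; first exact: valP.
  by rewrite -(H _ _ (valP _) (valP _) (fR _)).
rewrite card_imset; last exact: val_inj.
rewrite card_imset; last exact: val_inj.
by rewrite card_imset; last exact: bij_inj.
Qed.

Lemma mset_card (A : {set T}) (B : {set T'}) R : mset_eq A B R -> #|A| = #|B|.
Proof.
move=> H; have := mset_count (P := predT) (P' := predT) H (fun _ _ _ _ _ => erefl).
have E (U : finType) (C : {set U}) : [set x in C | predT x] = C.
  by apply/setP=> x; rewrite inE andbT.
by rewrite !E.
Qed.

End Generic.

Section Clique.
Variables (T : finType) (e : rel T).

Lemma clique_satP S a :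
  reflect (forall i j, i \in S -> j \in S -> i != j -> adj e (a i) (a j))
          (clique_sat e S a).
Proof.
apply: (iffP forallP) => H.
  move=> i j iS jS ij; have := forallP (H i) j; by rewrite iS jS ij.
move=> i; apply/forallP => j; apply/implyP => /and3P [iS jS ij]; exact: H.
Qed.

Lemma sat_clique f a : sat e f a -> clique_sat e (tup f) a.
Proof. by case: f => /= [xs|xs g|zs g h|zs g h|xs k y g] // /andP[]. Qed.

Lemma wf_uniq f : wf f -> uniq (tup f).
Proof.
elim: f => /= [xs|xs g IH|zs g IHg h IHh|zs g IHg h IHh|xs k y g IH] //.
- by case/andP=> /IH + /eqP<-.
- by case/and3P=> _ _ /andP[].
- by case/and3P=> _ _ /andP[].
- by case/and4P=> _ _; rewrite rcons_uniq => /andP[].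
Qed.

End Clique.

Section EB.
Variables (T T' : finType) (e : rel T) (e' : rel T').

Lemma eb_rev t : forall u v u' v', eb_eq t e e' (u, v) (u', v') -> eb_eq t e e' (v, u) (v', u').
Proof.
elim: t => [//|s IH] u v u' v' /= [H0 H1 H2 H3]; split => //; first exact: IH.
rewrite setIC [nbhd e' v' :&: _]setIC. apply: (mset_eq_impl H2) => ? ? [].
by split.
Qed.

Lemma eb_mono t s p p' : s <= t -> eb_eq t e e' p p' -> eb_eq s e e' p p'.
Proof.
elim: t => [|t IH]; first by rewrite leqn0 => /eqP->.
rewrite leq_eqVlt => /orP[/eqP->//|]; rewrite ltnS => st [H _ _ _]; exact: IH.
Qed.

Lemma graph_mono t s : s <= t -> eb_graph_eq t e e' -> eb_graph_eq s e e'.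
Proof. by move=> st H; apply: (mset_eq_impl H) => p p'; apply: eb_mono. Qed.

Lemma eb_deg t p p' : eb_eq t.+1 e e' p p' -> #|nbhd e p.1| = #|nbhd e' p'.1|.
Proof. by case=> _ H _ _; exact: mset_card H. Qed.

End EB.

Section Count.
Variables (T : finType) (e : rel T).

Lemma card_oedges (Q : pred T) :
  #|[set p in oedges e | Q p.1]| = \sum_(w | Q w) #|nbhd e w|.
Proof.
rewrite -sum1_card.
rewrite (eq_bigl (fun p : T * T => Q p.1 && e p.1 p.2)); last first.
  by move=> [w z]; rewrite !inE andbC.
rewrite -(pair_big_dep Q (fun w z => e w z) (fun _ _ => 1)) /=.
apply: eq_bigr => w _; rewrite -sum1_card.
by apply: eq_bigl => z; rewrite inE.
Qed.

End Count.

Section CountV.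
Variables (T T' : finType) (e : rel T) (e' : rel T').
Hypothesis noiso : forall v : T, exists u, e v u.
Hypothesis noiso' : forall v : T', exists u, e' v u.

Lemma deg_pos (U : finType) (f : rel U) (w z : U) : f w z -> 0 < #|nbhd f w|.
Proof. by move=> H; rewrite card_gt0; apply/set0Pn; exists z; rewrite inE. Qed.

Lemma edge_deg_card (U : finType) (f : rel U) (P : pred U) d :
  #|[set p in oedges f | P p.1 && (#|nbhd f p.1| == d)]| =
  #|[set w | P w && (#|nbhd f w| == d)]| * d.
Proof.
rewrite (card_oedges f (fun w => P w && (#|nbhd f w| == d))) (eq_bigr (fun _ => d)); last by move=> w /andP[_ /eqP].
rewrite sum_nat_const; congr (_ * _); apply: eq_card => w; by rewrite inE.
Qed.

Lemma count_vert t (P : pred T) (P' : pred T') :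
  eb_graph_eq t.+1 e e' ->
  (forall w z w' z', e w z -> e' w' z' -> eb_eq t.+1 e e' (w, z) (w', z') -> P w = P' w') ->
  #|[set w | P w]| = #|[set w' | P' w']|.
Proof.
move=> G HP.
have Hd d : #|[set w | P w && (#|nbhd e w| == d)]| = #|[set w | P' w && (#|nbhd e' w| == d)]|.
  have E2 : #|[set p in oedges e | P p.1 && (#|nbhd e p.1| == d)]| =
            #|[set p in oedges e' | P' p.1 && (#|nbhd e' p.1| == d)]|.
    apply: (mset_count G) => -[w z] [w' z']; rewrite !inE /= => ewz ewz' H.
    by rewrite (HP _ _ _ _ ewz ewz' H) (eb_deg H).
  case: d E2 => [|d] E2.
    have Z (U : finType) (f : rel U) (P0 : pred U) : (forall v, exists u, f v u) ->
        #|[set w | P0 w && (#|nbhd f w| == 0)]| = 0.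
      move=> ni; apply/eqP; rewrite cards_eq0; apply/eqP/setP => w; rewrite !inE.
      have [z fz] := ni w; by rewrite eqn0Ngt (deg_pos fz) andbF.
    by rewrite !Z.
  apply/eqP; rewrite -(eqn_pmul2l (ltn0Sn d)) mulnC [d.+1 * _]mulnC.
  by rewrite -!edge_deg_card E2.
have HN N : #|[set w | P w && (#|nbhd e w| < N)]| = #|[set w | P' w && (#|nbhd e' w| < N)]|.
  elim: N => [|N IH].
    have Z (U : finType) (f : rel U) (P0 : pred U) :
        #|[set w | P0 w && (#|nbhd f w| < 0)]| = 0.
      by apply/eqP; rewrite cards_eq0; apply/eqP/setP => w; rewrite !inE ltn0 andbF.
    by rewrite !Z.
  have S (U : finType) (f : rel U) (P0 : pred U) :
      #|[set w | P0 w && (#|nbhd f w| < N.+1)]| =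
      #|[set w | P0 w && (#|nbhd f w| < N)]| + #|[set w | P0 w && (#|nbhd f w| == N)]|.
    have -> : [set w | P0 w && (#|nbhd f w| < N.+1)] =
       [set w | P0 w && (#|nbhd f w| < N)] :|: [set w | P0 w && (#|nbhd f w| == N)].
      apply/setP=> w; rewrite !inE ltnS leq_eqVlt.
      by case: (P0 w) (#|nbhd f w| == N) (#|nbhd f w| < N) => [] [] [].
    rewrite cardsU.
    have -> : [set w | P0 w && (#|nbhd f w| < N)] :&: [set w | P0 w && (#|nbhd f w| == N)] = set0.
      apply/setP=> w; rewrite !inE; case: eqP => [->|]; first by rewrite ltnn !andbF.
      by rewrite !andbF.
    by rewrite cards0 subn0.
  by rewrite !S IH Hd.
have Big (U : finType) (f : rel U) (P0 : pred U) M : #|U| < M ->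
    [set w | P0 w] = [set w | P0 w && (#|nbhd f w| < M)].
  move=> UM; apply/setP=> w; rewrite !inE (leq_ltn_trans (max_card _) UM).
  by rewrite andbT.
rewrite (Big _ e _ (#|T| + #|T'|).+1) ?ltnS ?leq_addr //.
by rewrite (Big _ e' _ (#|T| + #|T'|).+1) ?ltnS ?leq_addl.
Qed.

End CountV.

Lemma clique_upd_adj (U : finType) (f : rel U) xs y (a : var -> option U) x i w :
  clique_sat f (rcons xs y) (upd a y x) -> i \in xs -> y \notin xs -> a i = Some w -> f w x.
Proof.
move/clique_satP => Cl ixs yxs ai.
have iy : i != y by apply/eqP => iy; rewrite -iy ixs in yxs.
have := Cl i y; rewrite !mem_rcons !inE ixs eqxx orbT /= => /(_ isT isT iy).
by rewrite /upd eqxx (negbTE iy) ai.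
Qed.

Section Main.
Variables (T T' : finType) (e : rel T) (e' : rel T').
Hypothesis sym : symmetric e.
Hypothesis sym' : symmetric e'.
Hypothesis noiso : forall v : T, exists u, e v u.
Hypothesis noiso' : forall v : T', exists u, e' v u.

Definition vequiv t (w : T) (w' : T') :=
  exists z z', [/\ e w z, e' w' z' & eb_eq t e e' (w, z) (w', z')].

Definition eqv t (S : seq var) (a : var -> option T) (a' : var -> option T') : Prop :=
 [/\ eb_graph_eq t e e', clique_sat e S a = clique_sat e' S a' &
  clique_sat e S a ->
  (forall i, i \in S -> exists w w', [/\ a i = Some w, a' i = Some w' & vequiv t w w']) /\
  (forall i j w1 w2 w1' w2', i \in S -> j \in S -> i != j -> a i = Some w1 -> a j = Some w2 ->
      a' i = Some w1' -> a' j = Some w2' -> eb_eq t e e' (w1, w2) (w1', w2'))].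

Lemma equiv_sub t S S' a a' :
  eqv t S a a' -> clique_sat e S a -> {subset S' <= S} -> eqv t S' a a'.
Proof.
case=> G C H cl sub; have [Hv Hp] := H cl.
have cl' : clique_sat e' S a' by rewrite -C.
have cs (U : finType) (f : rel U) b : clique_sat f S b -> clique_sat f S' b.
  by move/clique_satP=> X; apply/clique_satP => i j iS jS; apply: X; apply: sub.
split => //; first by rewrite !cs.
move=> _; split; first by move=> i iS; exact: Hv (sub _ iS).
by move=> i j w1 w2 w1' w2' iS jS; apply: Hp; apply: sub.
Qed.

Lemma equiv_build t S a a' :
 eb_graph_eq t e e' ->
 (forall i, i \in S -> exists w w', [/\ a i = Some w, a' i = Some w' & vequiv t w w']) ->
 (forall i j w1 w2 w1' w2', i \in S -> j \in S -> i != j -> a i = Some w1 -> a j = Some w2 ->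
    a' i = Some w1' -> a' j = Some w2' -> [/\ e w1 w2, e' w1' w2' & eb_eq t e e' (w1, w2) (w1', w2')]) ->
 eqv t S a a'.
Proof.
move=> G Hv Hp.
have cl : clique_sat e S a.
  apply/clique_satP => i j iS jS ij.
  have [w1 [w1' [ai a'i _]]] := Hv i iS; have [w2 [w2' [aj a'j _]]] := Hv j jS.
  by rewrite ai aj; case: (Hp i j w1 w2 w1' w2' iS jS ij ai aj a'i a'j).
have cl' : clique_sat e' S a'.
  apply/clique_satP => i j iS jS ij.
  have [w1 [w1' [ai a'i _]]] := Hv i iS; have [w2 [w2' [aj a'j _]]] := Hv j jS.
  by rewrite a'i a'j; case: (Hp i j w1 w2 w1' w2' iS jS ij ai aj a'i a'j).
split => //; first by rewrite cl cl'.
move=> _; split => // i j w1 w2 w1' w2' iS jS ij ai aj a'i a'j.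
by case: (Hp i j w1 w2 w1' w2' iS jS ij ai aj a'i a'j).
Qed.


Lemma upd_same (U : finType) (a : var -> option U) y x : upd a y x y = Some x.
Proof. by rewrite /upd eqxx. Qed.

Lemma sat_equiv f : wf f -> forall t a a', qdepth f <= t -> eqv t (tup f) a a' ->
  sat e f a = sat e' f a'.
Proof.
elim: f => [xs|xs g IH|zs g IHg h IHh|zs g IHg h IHh|xs k y g IH] /=.
- by move=> _ t a a' _ [_ C _].
- case/andP=> wg /eqP tg t a a' d Eq; have [G C H] := Eq.
  rewrite C; case cl: (clique_sat e' xs a') => //=.
  by rewrite (IH wg t a a') // tg.
- case/and3P=> wg wh /andP[uz /forallP U] t a a' d Eq; have [G C H] := Eq.
  rewrite -C; case cl: (clique_sat e zs a) => //=.
  rewrite geq_max in d; case/andP: d => dg dh.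
  have sg : {subset tup g <= zs} by move=> v vg; have := U v; rewrite vg /= => /eqP->.
  have sh : {subset tup h <= zs} by move=> v vh; have := U v; rewrite vh orbT => /eqP->.
  by rewrite (IHg wg t a a' dg (equiv_sub Eq cl sg)) (IHh wh t a a' dh (equiv_sub Eq cl sh)).
- case/and3P=> wg wh /andP[uz /forallP U] t a a' d Eq; have [G C H] := Eq.
  rewrite -C; case cl: (clique_sat e zs a) => //=.
  rewrite geq_max in d; case/andP: d => dg dh.
  have sg : {subset tup g <= zs} by move=> v vg; have := U v; rewrite vg /= => /eqP->.
  have sh : {subset tup h <= zs} by move=> v vh; have := U v; rewrite vh orbT => /eqP->.
  by rewrite (IHg wg t a a' dg (equiv_sub Eq cl sg)) (IHh wh t a a' dh (equiv_sub Eq cl sh)).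
- case/and4P=> wg k0 uq /eqP tg [//|t] a a' d Eq; have [G C H] := Eq.
  rewrite ltnS in d.
  rewrite -C; case cl: (clique_sat e xs a) => //=.
  have [Hv Hp] := H cl.
  have cl' : clique_sat e' xs a' by rewrite -C.
  congr (_ <= _).
  have yxs : y \notin xs by move: uq; rewrite rcons_uniq => /andP[].
  have sz : size xs < 3.
    have := max_card (mem (rcons xs y)); rewrite card_ord (card_uniqP uq) size_rcons.
    done.
  have updo (U : finType) (b : var -> option U) x i : i \in xs -> upd b y x i = b i.
    move=> ixs; rewrite /upd; case: eqP => // iy; by rewrite -iy ixs in yxs.
  have Gt : eb_graph_eq t e e' by apply: graph_mono G.
  case: xs uq Hv Hp cl cl' tg yxs sz updo C H Eq => [|i [|j [|? ?]]] //= uq Hv Hp cl cl' tg yxs sz updo C H Eq.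
  +
    apply: (count_vert noiso noiso' G) => w z w' z' ewz ewz' Heb.
    apply: (IH wg t) => //; rewrite tg.
    apply: equiv_build => //.
      move=> i; rewrite inE => /eqP->; exists w, w'; split; rewrite ?upd_same //.
      by exists z, z'; split => //; apply: eb_mono Heb.
    by move=> i j ? ? ? ? ; rewrite !inE => /eqP-> /eqP->; rewrite eqxx.
  +
    have [w [w' [ai a'i [z0 [z0' [_ _ Heb0]]]]]] := Hv i (mem_head _ _).
    have [_ HN _ _] := Heb0.
    have iy : i != y by move: yxs; rewrite ?inE eq_sym.
    have Eset (U : finType) (f : rel U) (b : var -> option U) wb : b i = Some wb ->
        [set x | sat f g (upd b y x)] = [set x in nbhd f wb | sat f g (upd b y x)].
      move=> bi; apply/setP=> x; rewrite !inE; case s: (sat f g _); rewrite ?andbT ?andbF //.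
      apply/esym; move: (sat_clique s); rewrite tg => Cl.
      by apply: (clique_upd_adj (xs := [:: i]) Cl) => //; rewrite ?inE.
    rewrite (Eset _ e a w ai) (Eset _ e' a' w' a'i).
    apply: (mset_count HN) => x x'; rewrite !inE => ewx ewx' Hx.
    have exw : e x w by rewrite sym.
    have exw' : e' x' w' by rewrite sym'.
    apply: (IH wg t) => //; rewrite tg.
    apply: equiv_build => //.
      move=> kk; rewrite !inE => /orP[]/eqP->.
        exists w, w'; rewrite !updo ?inE ?eqxx //; split => //; by exists x, x'.
      exists x, x'; rewrite !upd_same; split => //; exists w, w'; split => //.
      by apply: eb_rev.
    move=> k1 k2 x1 x2 x1' x2'; rewrite !inE => /orP[]/eqP-> /orP[]/eqP->; rewrite ?eqxx //= => _;
      rewrite /upd ?eqxx ?(negbTE iy) ?ai ?a'i => -[<-] [<-] [<-] [<-]; split => //.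
    by apply: eb_rev.
  +
    have iy : i != y by apply/eqP => E; move: yxs; rewrite -E ?inE eqxx.
    have jy : j != y by apply/eqP => E; move: yxs; rewrite -E ?inE eqxx ?orbT.
    have ij : i != j by move: uq; rewrite /= !inE negb_or => /andP[/andP[]].
    have ixs : i \in [:: i; j] by rewrite !inE eqxx.
    have jxs : j \in [:: i; j] by rewrite !inE eqxx orbT.
    have [w1 [w1' [ai a'i _]]] := Hv i ixs.
    have [w2 [w2' [aj a'j _]]] := Hv j jxs.
    have Heb12 := Hp i j w1 w2 w1' w2' ixs jxs ij ai aj a'i a'j.
    have [_ _ HC _] := Heb12.
    have H12 : eb_eq t e e' (w1, w2) (w1', w2') by case: Heb12.
    have e12 : e w1 w2 by move/clique_satP: cl => /(_ i j ixs jxs ij); rewrite ai aj.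
    have e12' : e' w1' w2' by move/clique_satP: cl' => /(_ i j ixs jxs ij); rewrite a'i a'j.
    have e21 : e w2 w1 by rewrite sym.
    have e21' : e' w2' w1' by rewrite sym'.
    have Eset (U : finType) (f : rel U) (b : var -> option U) wb1 wb2 : b i = Some wb1 -> b j = Some wb2 ->
        [set x | sat f g (upd b y x)] = [set x in nbhd f wb1 :&: nbhd f wb2 | sat f g (upd b y x)].
      move=> bi bj; apply/setP=> x; rewrite !inE; case s: (sat f g _); rewrite ?andbT ?andbF //.
      apply/esym; move: (sat_clique s); rewrite tg => Cl.
      by apply/andP; split; [apply: (clique_upd_adj (xs := [:: i; j]) (i := i) Cl) | apply: (clique_upd_adj (xs := [:: i; j]) (i := j) Cl)].
    rewrite (Eset _ e a w1 w2 ai aj) (Eset _ e' a' w1' w2' a'i a'j).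
    apply: (mset_count HC) => x x'; rewrite !inE => /andP[e1x e2x] /andP[e1x' e2x'] [H1 H2].
    have ex1 : e x w1 by rewrite sym.
    have ex1' : e' x' w1' by rewrite sym'.
    have ex2 : e x w2 by rewrite sym.
    have ex2' : e' x' w2' by rewrite sym'.
    apply: (IH wg t) => //; rewrite tg.
    apply: equiv_build => //.
      move=> kk; rewrite !inE => /or3P[]/eqP->.
      - exists w1, w1'; rewrite !updo //; split => //; by exists x, x'.
      - exists w2, w2'; rewrite !updo //; split => //; by exists x, x'.
      - exists x, x'; rewrite !upd_same; split => //; exists w1, w1'; split => //.
        by apply: eb_rev.
    move=> k1 k2 x1 x2 x1' x2'; rewrite !inE => /or3P[]/eqP-> /or3P[]/eqP->; rewrite ?eqxx //= => _;
      rewrite /upd ?eqxx ?(negbTE iy) ?(negbTE jy) ?ai ?a'i ?aj ?a'j => -[<-] [<-] [<-] [<-]; split => //;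
      by apply: eb_rev.
Qed.

End Main.

Theorem mainTheorem7 (T T' : finType) (e : rel T) (e' : rel T')
  (u v : T) (u' v' : T') :
  is_graph e -> is_graph e' -> e u v -> e' u' v' ->
  forall t : nat,
    (eb_graph_eq t e e' -> same_type t e e' [::] [::]) /\
    (eb_eq t e e' (u, v) (u', v') -> eb_graph_eq t e e' ->
       [/\ same_type t e e' [:: u] [:: u'],
           same_type t e e' [:: v] [:: v'] &
           same_type t e e' [:: u; v] [:: u'; v']]).
Proof.
move=> [sym [_ ni]] [sym' [_ ni']] euv euv' t.
have evu : e v u by rewrite sym.
have evu' : e' v' u' by rewrite sym'.
split.
  move=> G f wf d sz.
  have E : eqv e e' t (tup f) (assign (tup f) [::]) (assign (tup f) [::]).
    case: (tup f) sz => // _; apply: equiv_build => //.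
  by rewrite /models (sat_equiv sym sym' ni ni' wf d E).
move=> Huv G; have Hvu := eb_rev Huv.
have one (w z : T) (w' z' : T') : e w z -> e' w' z' -> eb_eq t e e' (w, z) (w', z') ->
    same_type t e e' [:: w] [:: w'].
  move=> ewz ewz' H f wf d sz.
  have E : eqv e e' t (tup f) (assign (tup f) [:: w]) (assign (tup f) [:: w']).
    case: (tup f) sz => [|i0 []] // _; apply: equiv_build => //.
      move=> k; rewrite inE => /eqP->; exists w, w'; rewrite /assign inE eqxx /= eqxx.
      by split => //; exists z, z'.
    by move=> k1 k2 ? ? ? ?; rewrite !inE => /eqP-> /eqP->; rewrite eqxx.
  by rewrite /models (sat_equiv sym sym' ni ni' wf d E).
split; [exact: (one u v u' v') | exact: (one v u v' u') |].
move=> f wf d sz.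
have E : eqv e e' t (tup f) (assign (tup f) [:: u; v]) (assign (tup f) [:: u'; v']).
  move: (wf_uniq wf); case: (tup f) sz => [|i0 [|j0 []]] // _.
  rewrite /= inE andbT => ij.
  have ji : j0 != i0 by rewrite eq_sym.
  apply: equiv_build => //.
    move=> k; rewrite !inE => /orP[]/eqP->.
      exists u, u'; rewrite /assign !inE eqxx /= eqxx; split => //; by exists v, v'.
    exists v, v'; rewrite /assign !inE eqxx orbT /= eqxx ?(negbTE ij) ?(negbTE ji) /=.
    by rewrite ?eqxx; split => //; exists u, u'.
  move=> k1 k2 x1 x2 x1' x2'; rewrite !inE => /orP[]/eqP-> /orP[]/eqP->; rewrite ?eqxx //= => _;
    rewrite /assign !inE !eqxx ?orbT /= ?eqxx ?(negbTE ij) ?(negbTE ji) /= ?eqxx => -[<-] [<-] [<-] [<-];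
    by split.
by rewrite /models (sat_equiv sym sym' ni ni' wf d E).
Qed.
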